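(* There exists a probability distribution of a random pair $(x,y)\in\mathbb{R}^3\times\mathbb{R}$ with finite second moments, $\Sigma=\mathbb{E}[xx^\top]$ invertible and $\Sigma_{ii}>0$ for all $i$, such that the Naive Bayes weight vector satisfies $w^{\mathrm{NB}}\neq w^*$ and, for every binary feature tree on $\{1,2,3\}$ and every admissible choice of least-squares weights at its nodes, the tree predictor satisfies $w^{\mathrm{tree}}\neq w^*$, where $w^*=\Sigma^{-1}b$ is the least-squares linear predictor.
   Context: Let $(x,y)$ be a random pair with $x=(x_1,\dots,x_n)\in\mathbb{R}^n$, $y\in\mathbb{R}$, finite second moments, $\Sigma:=\mathbb{E}[xx^\top]$ invertible with all $\Sigma_{ii}>0$, and $b:=\mathbb{E}[xy]\in\mathbb{R}^n$. The least-squares linear predictor is $w^*:=\Sigma^{-1}b=\arg\min_{w}\mathbb{E}[(\langle w,x\rangle-y)^2]$. The Naive Bayes weight vector is $w^{\mathrm{NB}}\in\mathbb{R}^n$ with $w^{\mathrm{NB}}_i:=b_i/\Sigma_{ii}$. A feature tree on $\{1,\dots,n\}$ is a finite rooted tree in which every internal node has at least one child and whose leaves are in bijection with $\{1,\dots,n\}$; it is binary if every internal node has at most two children. Each node $v$ computes a prediction $p_v(x)$: the leaf labeled $i$ outputs $p_i(x)=w^{(0)}_i x_i$ with $w^{(0)}_i:=b_i/\Sigma_{ii}$; an internal node $v$ with children $c_1,\dots,c_k$ outputs $p_v(x)=\sum_{j=1}^k u^v_j\,p_{c_j}(x)$, where $u^v\in\mathbb{R}^k$ is any minimizer (an admissible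 choice) of $u\mapsto\mathbb{E}\big[(\sum_{j=1}^k u_j p_{c_j}(x)-y)^2\big]$. By induction every $p_v$ is a linear function of $x$; the tree predictor $w^{\mathrm{tree}}\in\mathbb{R}^n$ is the vector with $p_{\mathrm{root}}(x)=\langle w^{\mathrm{tree}},x\rangle$ for all $x$. *)

(* Defs.v *)
From HB Require Import structures.
From mathcomp Require Import all_boot all_order all_algebra.
Set Implicit Arguments. Unset Strict Implicit. Unset Printing Implicit Defensive.
Import Order.TTheory GRing.Theory Num.Theory.
Local Open Scope ring_scope.

(* A finitely supported probability distribution of (x,y) in R^n x R is given by
   m atoms, weights p : 'I_m -> R (nonnegative, summing to 1; imposed in the
   statement), and atom locations X k : 'cV_n, Y k : R. *)
Section Model.
Variables (R : realFieldType) (n m : nat).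
Variables (p : 'I_m -> R) (X : 'I_m -> 'cV[R]_n) (Y : 'I_m -> R).

Definition Expect (F : 'cV[R]_n -> R -> R) : R := \sum_(k < m) p k * F (X k) (Y k).

Definition Sigma : 'M[R]_n := \matrix_(i, j) Expect (fun x _ => x i 0 * x j 0).

Definition bvec : 'cV[R]_n := \col_i Expect (fun x y => x i 0 * y).

Definition wstar : 'cV[R]_n := invmx Sigma *m bvec.

Definition wNB : 'cV[R]_n := \col_i (bvec i 0 / Sigma i i).

Definition lin (w x : 'cV[R]_n) : R := \sum_i w i 0 * x i 0.

End Model.

Inductive btree (n : nat) : Type :=
| BLeaf of 'I_n
| BNode1 of btree n
| BNode2 of btree n & btree n.

Fixpoint leaves n (t : btree n) : seq 'I_n :=
  match t with
  | BLeaf i => [:: i]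
  | BNode1 t1 => leaves t1
  | BNode2 t1 t2 => leaves t1 ++ leaves t2
  end.

Definition is_feature_tree n (t : btree n) : bool := perm_eq (leaves t) (enum 'I_n).

(* tree_pred ... t w : w is the tree predictor of t for SOME admissible choice of
   least-squares weights at the internal nodes. *)
Inductive tree_pred (R : realFieldType) (n m : nat) (p : 'I_m -> R)
    (X : 'I_m -> 'cV[R]_n) (Y : 'I_m -> R) : btree n -> 'cV[R]_n -> Prop :=
| tp_leaf (i : 'I_n) :
    tree_pred p X Y (BLeaf i)
      (\col_j (if j == i then bvec p X Y i 0 / Sigma p X Y i i else 0))
| tp_node1 (t : btree n) (w : 'cV[R]_n) (u : R) :
    tree_pred p X Y t w ->
    (forall v : R,
        Expect p X Y (fun x y => (u * lin w x - y) ^+ 2)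
        <= Expect p X Y (fun x y => (v * lin w x - y) ^+ 2)) ->
    tree_pred p X Y (BNode1 t) (u *: w)
| tp_node2 (t1 t2 : btree n) (w1 w2 : 'cV[R]_n) (u1 u2 : R) :
    tree_pred p X Y t1 w1 -> tree_pred p X Y t2 w2 ->
    (forall v1 v2 : R,
        Expect p X Y (fun x y => (u1 * lin w1 x + u2 * lin w2 x - y) ^+ 2)
        <= Expect p X Y (fun x y => (v1 * lin w1 x + v2 * lin w2 x - y) ^+ 2)) ->
    tree_pred p X Y (BNode2 t1 t2) (u1 *: w1 + u2 *: w2).

(* Main.v *)
Require Import Defs.
From HB Require Import structures.
From mathcomp Require Import all_boot all_order all_algebra.
Import Order.TTheory GRing.Theory Num.Theory.
Local Open Scope ring_scope.
Section K.
Variable R : realFieldType.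

Lemma key2 m (p : 'I_m -> R) (f g h : 'I_m -> R) (c1 c2 d1 d2 : R) :
 (forall k, 0 < p k) ->
 \sum_k p k * (f k * (d1 * f k + d2 * g k)) = \sum_k p k * (f k * h k) ->
 \sum_k p k * (g k * (d1 * f k + d2 * g k)) = \sum_k p k * (g k * h k) ->
 \sum_k p k * (c1 * f k + c2 * g k - h k)^+2 <= \sum_k p k * (d1 * f k + d2 * g k - h k)^+2 ->
 forall k, (c1 - d1) * f k + (c2 - d2) * g k = 0.
Proof.
move=> pos N1 N2 Hle.
set e := fun k => d1 * f k + d2 * g k - h k.
set dl := fun k => (c1 - d1) * f k + (c2 - d2) * g k.
have pw : forall k, c1 * f k + c2 * g k - h k = dl k + e k.
  move=> k; rewrite /dl /e !mulrBl.
  rewrite addrA; congr (_ - _).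
  rewrite addrACA -!addrA; congr (_ + _).
  by rewrite addNr addr0 addKr.
have Ef : \sum_k p k * (f k * e k) = 0.
  rewrite /e; under eq_bigr => k _ do rewrite mulrBr mulrBr.
  by rewrite sumrB N1 subrr.
have Eg : \sum_k p k * (g k * e k) = 0.
  rewrite /e; under eq_bigr => k _ do rewrite mulrBr mulrBr.
  by rewrite sumrB N2 subrr.
have Ed : \sum_k p k * (dl k * e k) = 0.
  have -> : \sum_k p k * (dl k * e k) =
     (c1 - d1) * \sum_k p k * (f k * e k) + (c2 - d2) * \sum_k p k * (g k * e k).
    rewrite !mulr_sumr -big_split /=; apply: eq_bigr => k _ /=.
    rewrite /dl mulrDl mulrDr !mulrA.
    by congr (_ + _); rewrite (mulrC (p k)) -!mulrA.
  by rewrite Ef Eg !mulr0 addr0.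
move: Hle; under eq_bigr => k _ do rewrite pw sqrrD mulrDr mulrDr mulrnAr.
rewrite big_split big_split /= sumrMnl Ed mul0rn addr0.
rewrite -[X in _ <= X]/(\sum_k p k * e k ^+ 2).
rewrite gerDr => Hle.
have Z : \sum_k p k * dl k ^+ 2 = 0.
  apply/eqP; rewrite eq_le Hle /=.
  apply: sumr_ge0 => k _; apply: mulr_ge0; [exact: ltW | exact: sqr_ge0].
have nn : forall i : 'I_m, true -> 0 <= p i * dl i ^+ 2.
  move=> i _; apply: mulr_ge0; [exact: ltW | exact: sqr_ge0].
move=> k; have /eqP := @psumr_eq0P _ _ _ _ nn Z k isT.
by rewrite mulf_eq0 sqrf_eq0 gt_eqF //= => /eqP.
Qed.
End K.
Section G.
Variable R : realFieldType.
Variables (n m : nat) (p : 'I_m -> R) (X : 'I_m -> 'cV[R]_n) (Y : 'I_m -> R).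

Lemma sigma_mul (v : 'cV[R]_n) : (forall k, lin v (X k) = Y k) ->
  Sigma p X Y *m v = bvec p X Y.
Proof.
move=> H; apply/matrixP => i j; rewrite !mxE (ord1 j) /Expect.
under eq_bigr => l _ do rewrite !mxE /Expect mulr_suml.
rewrite exchange_big /=; apply: eq_bigr => k _.
rewrite -H /lin !mulr_sumr; apply: eq_bigr => l _.
by rewrite -!mulrA (mulrC (X k l 0)).
Qed.

Lemma ac5 (a b c d e : R) : a * (b * (c * d)) * e = b * (a * c * (e * d)).
Proof. by rewrite !mulrA (mulrC a b) (mulrAC _ d e). Qed.

Lemma quadf (r : 'rV[R]_n) :
  \sum_j (r *m Sigma p X Y) 0 j * r 0 j = \sum_k p k * (\sum_i r 0 i * X k i 0) ^+ 2.
Proof.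
under eq_bigr => j _ do rewrite !mxE mulr_suml.
rewrite exchange_big /=.
rewrite [RHS](eq_bigr (fun k => \sum_j \sum_i p k * ((r 0 j * X k j 0) * (r 0 i * X k i 0)))); last first.
  move=> k _; rewrite expr2 mulr_suml mulr_sumr; apply: eq_bigr => j _.
  by rewrite mulr_sumr mulr_sumr.
rewrite [RHS]exchange_big /=; apply: eq_bigr => j _.
rewrite [RHS]exchange_big /=; apply: eq_bigr => i _.
rewrite mxE /Expect mulr_sumr mulr_suml; apply: eq_bigr => k _.
exact: ac5.
Qed.

Lemma sigma_unit : (forall k, 0 < p k) ->
  (forall r : 'rV[R]_n, (forall k, \sum_i r 0 i * X k i 0 = 0) -> r = 0) ->
  Sigma p X Y \in unitmx.
Proof.
move=> pos H; rewrite -row_free_unit -kermx_eq0; apply/eqP.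
apply/matrixP => a b; rewrite mxE.
set r := row a (kermx (Sigma p X Y)).
have rS : r *m Sigma p X Y = 0 by rewrite /r -row_mul mulmx_ker row0.
suff: r = 0 by move/matrixP/(_ 0 b); rewrite !mxE.
clearbody r; apply: H.
have Q : \sum_k p k * (\sum_i r 0 i * X k i 0) ^+ 2 = 0.
  by rewrite -quadf rS; apply: big1 => j _; rewrite mxE mul0r.
have nn : forall k : 'I_m, true -> 0 <= p k * (\sum_i r 0 i * X k i 0) ^+ 2.
  move=> k _; apply: mulr_ge0; [exact: ltW | exact: sqr_ge0].
move=> k; have /eqP := @psumr_eq0P _ _ _ _ nn Q k isT.
by rewrite mulf_eq0 sqrf_eq0 gt_eqF //= => /eqP.
Qed.
End G.
Definition xv (k j : nat) : nat := if k == 3%N then 1%N else (k == j : nat).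
Definition yv (k : nat) : nat := nth 0%N [:: 3; 6; 9; 18]%N k.
Definition dvn (a l : nat) : nat := nth 0%N (nth [::] [:: [:: 0;7;10]; [:: 5;0;11]; [:: 6;9;0]]%N a) l.
Section C.
Variable R : realFieldType.
Definition P4 : 'I_4 -> R := fun _ => 4^-1.
Definition X4 : 'I_4 -> 'cV[R]_3 := fun k => \col_j (xv k j)%:R.
Definition Y4 : 'I_4 -> R := fun k => (yv k)%:R.
Definition dv (a : 'I_3) : 'cV[R]_3 := \col_l (dvn a l)%:R.
Definition wv : 'cV[R]_3 := \col_l (yv l)%:R.

Lemma four_neq0 : (4 : R) != 0. Proof. by rewrite pnatr_eq0. Qed.

Lemma P4pos k : 0 < P4 k. Proof. by rewrite /P4 invr_gt0 ltr0n. Qed.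

Lemma P4sum : \sum_(k < 4) P4 k = 1.
Proof. by rewrite /P4 sumr_const card_ord -[_ *+ 4]mulr_natr mulVf // four_neq0. Qed.

Lemma wv_lin k : lin wv (X4 k) = Y4 k.
Proof.
rewrite /lin /wv /X4 /Y4; under eq_bigr => i _ do rewrite !mxE -natrM.
rewrite -natr_sum !big_ord_recr !big_ord0 /=.
by case: k => [[|[|[|[|?]]]] ?].
Qed.

Lemma kerX (r : 'rV[R]_3) : (forall k, \sum_i r 0 i * X4 k i 0 = 0) -> r = 0.
Proof.
move=> H; apply/matrixP => a b; rewrite (ord1 a) mxE.
have := H (widen_ord (leqnSn 3) b).
rewrite !big_ord_recr big_ord0 /= /X4 !mxE /xv /=.
by case: b => [[|[|[|?]]] ?] //=; rewrite !mulr1 !mulr0 !addr0 add0r => <-; congr (r 0 _); apply: val_inj.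
Qed.

Lemma Sig_pos i : 0 < Sigma P4 X4 Y4 i i.
Proof.
rewrite mxE /Expect /P4 /X4; under eq_bigr => k _ do rewrite !mxE -natrM.
rewrite -mulr_sumr -natr_sum !big_ord_recr !big_ord0 /=.
by rewrite mulr_gt0 ?invr_gt0 ?ltr0n //; case: i => [[|[|[|?]]] ?].
Qed.

Lemma atomX (i l : 'I_3) : X4 (widen_ord (leqnSn 3) i) l 0 = (i == l)%:R.
Proof. by rewrite /X4 mxE /xv /= ltn_eqF. Qed.

Lemma normeq1 (i j a : 'I_3) : i != j -> a != i -> a != j ->
  \sum_k P4 k * (X4 k i 0 * (dv a i 0 * X4 k i 0 + dv a j 0 * X4 k j 0)) = \sum_k P4 k * (X4 k i 0 * Y4 k).
Proof.
rewrite /P4 /X4 /Y4 /dv.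
under eq_bigr => k _ do rewrite !mxE -!natrM -natrD -natrM.
under [RHS]eq_bigr => k _ do rewrite !mxE -!natrM.
rewrite -!mulr_sumr -!natr_sum.
move=> Hij Hai Haj; congr (_ * _%:R).
rewrite !big_ord_recr !big_ord0 /=.
by move: Hij Hai Haj; case: i j a => [[|[|[|?]]] ?] [[|[|[|?]]] ?] [[|[|[|?]]] ?].
Qed.

Lemma normeq2 (i j a : 'I_3) : i != j -> a != i -> a != j ->
  \sum_k P4 k * (X4 k j 0 * (dv a i 0 * X4 k i 0 + dv a j 0 * X4 k j 0)) = \sum_k P4 k * (X4 k j 0 * Y4 k).
Proof.
rewrite /P4 /X4 /Y4 /dv.
under eq_bigr => k _ do rewrite !mxE -!natrM -natrD -natrM.
under [RHS]eq_bigr => k _ do rewrite !mxE -!natrM.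
rewrite -!mulr_sumr -!natr_sum.
move=> Hij Hai Haj; congr (_ * _%:R).
rewrite !big_ord_recr !big_ord0 /=.
by move: Hij Hai Haj; case: i j a => [[|[|[|?]]] ?] [[|[|[|?]]] ?] [[|[|[|?]]] ?].
Qed.

Lemma wv_not_span (a : 'I_3) (r : R) : ~ (forall l, l != a -> wv l 0 = r * dv a l 0).
Proof.
move=> H; rewrite /wv /dv in H.
have E : forall b c : 'I_3, b != a -> c != a ->
   (yv b * dvn a c)%:R = (yv c * dvn a b)%:R :> R.
  move=> b c hb hc; have := H b hb; have := H c hc; rewrite !natrM !mxE => -> ->.
  by rewrite mulrAC.
case: a E H => [[|[|[|?]]] ?] // E _.
- by move/eqP: (E (@Ordinal 3 1 isT) (@Ordinal 3 2 isT) isT isT); rewrite eqr_nat.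
- by move/eqP: (E (@Ordinal 3 0 isT) (@Ordinal 3 2 isT) isT isT); rewrite eqr_nat.
- by move/eqP: (E (@Ordinal 3 0 isT) (@Ordinal 3 1 isT) isT isT); rewrite eqr_nat.
Qed.
Lemma sg0 : Sigma P4 X4 Y4 ord0 ord0 = 4^-1 * 2%:R.
Proof.
rewrite mxE /Expect /P4 /X4; under eq_bigr => k _ do rewrite !mxE -natrM.
by rewrite -mulr_sumr -natr_sum !big_ord_recr !big_ord0 /=.
Qed.

Lemma bv0 : bvec P4 X4 Y4 ord0 0 = 4^-1 * 21%:R.
Proof.
rewrite mxE /Expect /P4 /X4 /Y4; under eq_bigr => k _ do rewrite !mxE -natrM.
by rewrite -mulr_sumr -natr_sum !big_ord_recr !big_ord0 /=.
Qed.

Lemma wNB_ne : wNB P4 X4 Y4 <> wv.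
Proof.
move/matrixP/(_ ord0 0).
have -> : wNB P4 X4 Y4 ord0 0 = bvec P4 X4 Y4 ord0 0 / Sigma P4 X4 Y4 ord0 ord0 by rewrite mxE.
rewrite sg0 bv0 /wv mxE /=.
have nz : 4^-1 * 2%:R != 0 :> R by rewrite mulf_neq0 ?invr_eq0 ?four_neq0 ?pnatr_eq0.
move/(congr1 (fun z => z * (4^-1 * 2%:R))); rewrite divfK // mulrCA.
move/(mulrI _); rewrite unitfE invr_eq0 four_neq0 => /(_ isT) /eqP.
by rewrite -natrM eqr_nat.
Qed.

Definition Inv (l : seq 'I_3) (w : 'cV[R]_3) : Prop :=
  match l with
  | [:: i] => forall j, j != i -> w j 0 = 0
  | [:: i; j] => forall k, k != i -> k != j -> w k 0 = 0 /\
      (w i 0 = 0 \/ w j 0 = 0 \/ exists s, forall l, l != k -> w l 0 = s * dv k l 0)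
  | [:: _; _; _] => (exists i, w i 0 = 0) \/
      exists a r, forall l, l != a -> w l 0 = r * dv a l 0
  | _ => True
  end.

Lemma lin_supp (w x : 'cV[R]_3) i : (forall j, j != i -> w j 0 = 0) -> lin w x = w i 0 * x i 0.
Proof.
move=> H; rewrite /lin (bigD1 i) //= big1 ?addr0 // => j hj.
by rewrite H ?mul0r.
Qed.

Lemma third3 (a b c l : 'I_3) : a != b -> c != a -> c != b -> l != c -> (l == a) || (l == b).
Proof.
by case: a b c l => [[|[|[|?]]] ?] [[|[|[|?]]] ?] [[|[|[|?]]] ?] [[|[|[|?]]] ?].
Qed.

Lemma pair_case (x1 x2 : 'I_3) (w1 w2 : 'cV[R]_3) (u1 u2 : R) :
 x1 != x2 -> (forall j, j != x1 -> w1 j 0 = 0) -> (forall j, j != x2 -> w2 j 0 = 0) ->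
 (forall v1 v2 : R,
   Expect P4 X4 Y4 (fun x y => (u1 * lin w1 x + u2 * lin w2 x - y) ^+ 2)
   <= Expect P4 X4 Y4 (fun x y => (v1 * lin w1 x + v2 * lin w2 x - y) ^+ 2)) ->
 Inv [:: x1; x2] (u1 *: w1 + u2 *: w2).
Proof.
move=> h12 H1 H2 Hopt k hk1 hk2.
have h21 : x2 != x1 by rewrite eq_sym.
have E : forall l, (u1 *: w1 + u2 *: w2) l 0 = u1 * w1 l 0 + u2 * w2 l 0.
  by move=> l; rewrite !mxE.
rewrite !E (H1 k hk1) (H2 k hk2) !mulr0 addr0; split=> //.
rewrite (H2 x1 h12) (H1 x2 h21) !mulr0 addr0 add0r.
have [a0|anz] := eqVneq (u1 * w1 x1 0) 0; first by left.
have [b0|bnz] := eqVneq (u2 * w2 x2 0) 0; first by right; left.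
right; right; exists 1.
have w1nz : w1 x1 0 != 0 by apply: contraNneq anz => ->; rewrite mulr0.
have w2nz : w2 x2 0 != 0 by apply: contraNneq bnz => ->; rewrite mulr0.
have L1 : forall x, lin w1 x = w1 x1 0 * x x1 0 := fun x => lin_supp w1 x x1 H1.
have L2 : forall x, lin w2 x = w2 x2 0 * x x2 0 := fun x => lin_supp w2 x x2 H2.
have Hle := Hopt (dv k x1 0 / w1 x1 0) (dv k x2 0 / w2 x2 0).
move: Hle; rewrite /Expect.
under eq_bigr => i _ do rewrite L1 L2 (mulrA u1) (mulrA u2).
under [X in _ <= X]eq_bigr => i _ do rewrite L1 L2 (mulrA (dv k x1 0 / _)) (mulrA (dv k x2 0 / _)) (divfK w1nz) (divfK w2nz).
move=> Hle.
have Hk := @key2 R 4 P4 (fun k => X4 k x1 0) (fun k => X4 k x2 0) Y4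
  (u1 * w1 x1 0) (u2 * w2 x2 0) (dv k x1 0) (dv k x2 0) P4pos
  (@normeq1 x1 x2 k h12 hk1 hk2) (@normeq2 x1 x2 k h12 hk1 hk2) Hle.
have := Hk (widen_ord (leqnSn 3) x1); rewrite !atomX eqxx (negbTE h12).
rewrite mulr1 mulr0 addr0 => /eqP; rewrite subr_eq0 => /eqP e1.
have := Hk (widen_ord (leqnSn 3) x2); rewrite !atomX eqxx (negbTE h21).
rewrite mulr1 mulr0 add0r => /eqP; rewrite subr_eq0 => /eqP e2.
move=> l hl; rewrite mul1r E.
case/orP: (@third3 _ _ _ _ h12 hk1 hk2 hl) => /eqP ->.
  by rewrite (H2 x1 h12) mulr0 addr0.
by rewrite (H1 x2 h21) mulr0 add0r.
Qed.

Lemma leaves_ne (t : btree 3) : (0 < size (leaves t))%N.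
Proof. by elim: t => //= t1 IH1 t2 IH2; rewrite size_cat addn_gt0 IH1. Qed.

Lemma inv_tree t w : tree_pred P4 X4 Y4 t w -> uniq (leaves t) -> Inv (leaves t) w.
Proof.
elim => [i | t0 w0 u _ IH _ | t1 t2 w1 w2 u1 u2 _ IH1 _ IH2 Hopt] /=.
- by move=> _ j hj; rewrite mxE (negbTE hj).
- move=> U; move: (IH U); case: (leaves t0) => [|a [|b [|c [|? ?]]]] //=.
  + by move=> H j hj; rewrite mxE H // mulr0.
  + move=> H k h1 h2; have [Hk D] := H k h1 h2; rewrite !mxE Hk mulr0; split=> //.
    case: D => [->|[->|[s Hs]]].
    * by left; rewrite mulr0.
    * by right; left; rewrite mulr0.
    * by right; right; exists (u * s) => l hl; rewrite mxE Hs // mulrA.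
  + case => [[i Hi]|[a0 [r Hr]]].
    * by left; exists i; rewrite mxE Hi mulr0.
    * by right; exists a0, (u * r) => l hl; rewrite mxE Hr // mulrA.
- rewrite cat_uniq => /and3P [U1 D U2].
  have E : forall l, (u1 *: w1 + u2 *: w2) l 0 = u1 * w1 l 0 + u2 * w2 l 0.
    by move=> l; rewrite !mxE.
  have I1 := IH1 U1; have I2 := IH2 U2; have n1 := leaves_ne t1; have n2 := leaves_ne t2.
  move: I1 I2 D U1 U2 n1 n2.
  case: (leaves t1) => [|x1 [|y1 [|z1 [|? ?]]]] //=;
  case: (leaves t2) => [|x2 [|y2 [|z2 [|? ?]]]] //=.
  + move=> H1 H2; rewrite inE orbF => D _ _ _ _.
    have h12 : x1 != x2 by rewrite eq_sym.
    exact: (@pair_case _ _ _ _ _ _ h12 H1 H2 Hopt).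
  + move=> H1 H2; rewrite !inE orbF negb_or => /andP [hx2 hy2] _ U2 _ _.
    have hx2' : x1 != x2 by rewrite eq_sym.
    have hy2' : x1 != y2 by rewrite eq_sym.
    have [_ D] := H2 x1 hx2' hy2'.
    case: D => [h|[h|[s Hs]]].
    * by left; exists x2; rewrite E (H1 x2 hx2) h !mulr0 addr0.
    * by left; exists y2; rewrite E (H1 y2 hy2) h !mulr0 addr0.
    * right; exists x1, (u2 * s) => l hl.
      by rewrite E (H1 l hl) Hs // mulr0 add0r mulrA.
  + move=> H1 H2; rewrite !inE orbF => D U1 _ _ _.
    rewrite negb_or in D; case/andP: D => hx1 hy1.
    have [_ D] := H1 x2 hx1 hy1.
    case: D => [h|[h|[s Hs]]].
    * have hx1' : x1 != x2 by rewrite eq_sym.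
      by left; exists x1; rewrite E (H2 x1 hx1') h !mulr0 addr0.
    * have hy1' : y1 != x2 by rewrite eq_sym.
      by left; exists y1; rewrite E (H2 y1 hy1') h !mulr0 addr0.
    * right; exists x2, (u1 * s) => l hl.
      by rewrite E (H2 l hl) Hs // mulr0 addr0 mulrA.
Qed.

Lemma wstar_eq : wstar P4 X4 Y4 = wv.
Proof.
have U : Sigma P4 X4 Y4 \in unitmx by apply: sigma_unit; [exact: P4pos | exact: kerX].
by rewrite /wstar -(@sigma_mul _ _ _ _ _ _ _ wv_lin) mulKmx.
Qed.

End C.

Theorem proposition2 (R : realFieldType) :
  exists (m : nat) (p : 'I_m -> R) (X : 'I_m -> 'cV[R]_3) (Y : 'I_m -> R),
    [/\ (forall k, 0 <= p k), \sum_(k < m) p k = 1,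
        Sigma p X Y \in unitmx, (forall i, 0 < Sigma p X Y i i) &
        wNB p X Y <> wstar p X Y /\
        (forall (t : btree 3), is_feature_tree t ->
           forall w : 'cV[R]_3, tree_pred p X Y t w -> w <> wstar p X Y)].
Proof.
exists 4%N, (@P4 R), (@X4 R), (@Y4 R); split.
- by move=> k; apply: ltW; apply: P4pos.
- exact: P4sum.
- by apply: sigma_unit; [exact: P4pos | exact: kerX].
- exact: Sig_pos.
split; rewrite wstar_eq; first exact: wNB_ne.
move=> t ft w tw Ew; rewrite Ew in tw.
have U : uniq (leaves t) by rewrite (perm_uniq ft) enum_uniq.
have S : size (leaves t) = 3%N by rewrite (perm_size ft) size_enum_ord.
move: (@inv_tree R _ _ tw U) S; case: (leaves t) => [|a [|b [|c [|? ?]]]] //= H _.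
case: H => [[i]|[a0 [r Hr]]].
- by rewrite mxE; case: i => [[|[|[|?]]] ?] //= /eqP; rewrite pnatr_eq0.
- exact: (@wv_not_span R _ _ Hr).
Qed.
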